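(* For $v\in\mathbb{C}$ and integers $r\geq0$ define \begin{align*} \rho_r(v)&=\delta_{r,0}-\sum_{m=0}^{2r+1}(-1)^m\binom{v}{2r+1-m}\sum_{k=0}^{m}\frac{(2r+2k)!!}{(-1)^k k!}\mathcal{A}_{m,k}\!\left(\tfrac13,\tfrac14,\tfrac15,\dots\right),\\ \gamma_r(v)&=\sum_{m=0}^{2r}(-1)^m\binom{v}{2r-m}\sum_{k=0}^{m}\frac{(2r+2k-1)!!}{(-1)^k k!}\mathcal{A}_{m,k}\!\left(\tfrac13,\tfrac14,\tfrac15,\dots\right),\\ \tilde\rho_r(v)&=-\sum_{m=0}^{2r+1}\frac{v^{2r+1-m}}{(2r+1-m)!}\sum_{k=0}^{m}\frac{(2r+2k)!!}{(-1)^k k!}\mathcal{A}_{m,k}\!\left(\tfrac1{3!},\tfrac1{4!},\tfrac1{5!},\dots\right),\\ \tilde\gamma_r(v)&=\sum_{m=0}^{2r}\frac{v^{2r-m}}{(2r-m)!}\sum_{k=0}^{m}\frac{(2r+2k-1)!!}{(-1)^k k!}\mathcal{A}_{m,k}\!\left(\tfrac1{3!},\tfrac1{4!},\tfrac1{5!},\dots\right). \end{align*} Then $\rho_0(v)=\tilde\rho_0(v)$, $\gamma_0(v)=\tilde\gamma_0(v)$, and for $r\geq1$, \[ \rho_r(v)=\tilde\rho_r(v)+v\,\tilde\rho_{r-1}(v),\qquad \gamma_r(v)=\tilde\gamma_r(v)+v\,\tilde\gamma_{r-1}(v). \]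
   Context: De Moivre polynomial $\mathcal{A}_{n,k}(a_1,a_2,\dots)$: coefficient of $x^n$ in $(a_1x+a_2x^2+\cdots)^k$ (so $\mathcal{A}_{0,0}=1$, $\mathcal{A}_{n,k}=0$ for $n<k$). Double factorial $n!!=n(n-2)\cdots$ down to $1$ or $2$ for $n\geq1$, $0!!=(-1)!!=1$. $\binom{v}{j}=v(v-1)\cdots(v-j+1)/j!$; $\delta_{r,0}$ Kronecker delta. (The $\rho_r(v)$ are the asymptotic expansion coefficients of $\theta_n(v)$ in $\sum_{j=0}^{n+v-1}\frac{n^j}{j!}+\frac{n^{n+v}}{(n+v)!}\theta_n(v)=\frac{e^n}{2}$, and the $\gamma_r(v)$ those of $\Gamma(n+v+1)/(\sqrt{2\pi n}\,n^{n+v}e^{-n})$.) *)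

(* Defs.v *)
From HB Require Import structures.
From mathcomp Require Import all_boot all_order all_algebra.
From mathcomp Require Import complex.
From mathcomp Require Import reals.
Set Implicit Arguments. Unset Strict Implicit. Unset Printing Implicit Defensive.
Import Order.TTheory GRing.Theory Num.Theory.
Local Open Scope ring_scope.

Fixpoint dfact (n : nat) : nat :=
  match n with
  | 0 => 1
  | 1 => 1
  | (m.+2) as n' => n' * dfact m
  end%N.

Definition gbinom {F : fieldType} (v : F) (j : nat) : F :=
  (\prod_(i < j) (v - i%:R)) / (j`!)%:R.

(* Here a : nat -> F with a j = a_j (a 0 unused).
   Terms of degree > n do not affect the coefficient of x^n, so the series is
   truncated at degree n. *)
Definition deMoivre {F : fieldType} (a : nat -> F) (n k : nat) : F :=
  ((\poly_(i < n.+1) (if i == 0%N then 0 else a i)) ^+ k)`_n.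

Definition seqA {F : fieldType} (j : nat) : F := (j.+2)%:R^-1.
Definition seqB {F : fieldType} (j : nat) : F := ((j.+2)`!)%:R^-1.

(* inner sums; the double factorial argument is given as a nat
   (for gamma: 2r+2k-1, with (-1)!! = 1 handled separately) *)
Definition innerRho {F : fieldType} (a : nat -> F) (r m : nat) : F :=
  \sum_(k < m.+1) (dfact (2*r + 2*k))%:R / ((-1) ^+ k * (k`!)%:R) * deMoivre a m k.

(* (2r+2k-1)!! with the convention (-1)!! = 1 *)
Definition dfactm1 (n : nat) : nat := if n is n'.+1 then dfact n' else 1%N.

Definition innerGamma {F : fieldType} (a : nat -> F) (r m : nat) : F :=
  \sum_(k < m.+1) (dfactm1 (2*r + 2*k))%:R / ((-1) ^+ k * (k`!)%:R) * deMoivre a m k.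

Definition rho {F : fieldType} (r : nat) (v : F) : F :=
  (if r == 0%N then 1 else 0)
  - \sum_(m < (2*r+1).+1) (-1) ^+ m * gbinom v (2*r + 1 - m) * innerRho seqA r m.

Definition gamma {F : fieldType} (r : nat) (v : F) : F :=
  \sum_(m < (2*r).+1) (-1) ^+ m * gbinom v (2*r - m) * innerGamma seqA r m.

Definition rhot {F : fieldType} (r : nat) (v : F) : F :=
  - \sum_(m < (2*r+1).+1) v ^+ (2*r + 1 - m) / ((2*r + 1 - m)`!)%:R * innerRho seqB r m.

Definition gammat {F : fieldType} (r : nat) (v : F) : F :=
  \sum_(m < (2*r).+1) v ^+ (2*r - m) / ((2*r - m)`!)%:R * innerGamma seqB r m.

(* Main.v *)
Require Import Defs.
From HB Require Import structures.
From mathcomp Require Import all_boot all_order all_algebra.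
From mathcomp Require Import complex.
From mathcomp Require Import reals.
From mathcomp.algebra_tactics Require Import ring.
From mathcomp Require Import zify.
Import Order.TTheory GRing.Theory Num.Theory.
Local Open Scope ring_scope.
Set Implicit Arguments. Unset Strict Implicit. Unset Printing Implicit Defensive.

Section Eqm.
Variable F : numFieldType.
Implicit Types p q r : {poly F}.

Definition eqm n p q := 'X^n %| p - q.

Lemma eqm_coefP n p q : (forall i, (i < n)%N -> p`_i = q`_i) -> eqm n p q.
Proof.
move=> H; rewrite /eqm.
have E : take_poly n (p - q) = 0.
  apply/polyP=> i; rewrite coef_take_poly coef0.
  by case: ifP => // /H; rewrite coefB => ->; rewrite subrr.
by rewrite -(poly_take_drop n (p - q)) E add0r dvdp_mull.
Qed.

Lemma eqm_coef n p q i : eqm n p q -> (i < n)%N -> p`_i = q`_i.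
Proof.
move=> /dvdpP [d Hd] Hi; apply/eqP; rewrite -subr_eq0 -coefB Hd coefMXn Hi //.
Qed.

Lemma eqmP n p q : reflect (forall i, (i < n)%N -> p`_i = q`_i) (eqm n p q).
Proof.
apply: (iffP idP); [move=> H i; exact: eqm_coef | exact: eqm_coefP].
Qed.

Lemma eqm_refl n p : eqm n p p.
Proof. by rewrite /eqm subrr dvdp0. Qed.

Lemma eqm_sym n p q : eqm n p q -> eqm n q p.
Proof. by move/eqmP=> H; apply/eqmP=> i /H ->. Qed.

Lemma eqm_trans n p q r : eqm n p q -> eqm n q r -> eqm n p r.
Proof. by move/eqmP=> H1 /eqmP H2; apply/eqmP=> i Hi; rewrite H1 // H2. Qed.

Lemma eqm_le m n p q : (m <= n)%N -> eqm n p q -> eqm m p q.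
Proof.
by move=> Hmn /eqmP H; apply/eqmP=> i Hi; apply: H; apply: leq_trans Hmn.
Qed.

Lemma eqmD n p q p' q' : eqm n p q -> eqm n p' q' -> eqm n (p + p') (q + q').
Proof.
by move/eqmP=> H1 /eqmP H2; apply/eqmP=> i Hi; rewrite !coefD H1 // H2.
Qed.

Lemma eqmN n p q : eqm n p q -> eqm n (- p) (- q).
Proof. by move/eqmP=> H1; apply/eqmP=> i Hi; rewrite !coefN H1. Qed.

Lemma eqmB n p q p' q' : eqm n p q -> eqm n p' q' -> eqm n (p - p') (q - q').
Proof. by move=> H1 H2; apply: eqmD => //; apply: eqmN. Qed.

Lemma eqmZ n c p q : eqm n p q -> eqm n (c *: p) (c *: q).
Proof. by move/eqmP=> H1; apply/eqmP=> i Hi; rewrite !coefZ H1. Qed.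

Lemma eqmM n p q p' q' : eqm n p q -> eqm n p' q' -> eqm n (p * p') (q * q').
Proof.
move=> H1 H2; rewrite /eqm.
have -> : p * p' - q * q' = (p - q) * p' + q * (p' - q').
  by rewrite mulrBl mulrBr addrA subrK.
by apply: dvdp_add; [apply: dvdp_mulr | apply: dvdp_mull].
Qed.

Lemma eqmX n p q k : eqm n p q -> eqm n (p ^+ k) (q ^+ k).
Proof.
move=> H; elim: k => [|k IH]; first exact: eqm_refl.
by rewrite !exprS; apply: eqmM.
Qed.

Lemma eqm_sum n (I : Type) (s : seq I) (P : pred I) (f g : I -> {poly F}) :
  (forall i, P i -> eqm n (f i) (g i)) ->
  eqm n (\sum_(i <- s | P i) f i) (\sum_(i <- s | P i) g i).
Proof.
move=> H; elim/big_rec2: _ => [|i x y Pi Hxy]; first exact: eqm_refl.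
by apply: eqmD => //; apply: H.
Qed.

Lemma eqm_comp n p p' r : r`_0 = 0 -> eqm n p p' -> eqm n (p \Po r) (p' \Po r).
Proof.
move=> r0 /dvdpP [d Hd]; rewrite /eqm -comp_polyB Hd comp_polyM.
apply: dvdp_mull.
have : 'X %| r by rewrite -(subr0 'X) -polyC0 dvdp_XsubCl rootE horner_coef0 r0.
case/dvdpP=> r1 Er; rewrite rmorphXn /= comp_polyX Er exprMn; exact: dvdp_mull.
Qed.

Lemma eqm_deriv n p q : eqm n.+1 p q -> eqm n p^`() q^`().
Proof. by move/eqmP=> H; apply/eqmP=> i Hi; rewrite !coef_deriv H. Qed.

Lemma deriv0_eqm n p : eqm n p^`() 0 -> eqm n.+1 p (p`_0)%:P.
Proof.
move/eqmP=> H; apply/eqmP=> [[|i]] Hi; first by rewrite coefC.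
rewrite coefC /=; have := H i Hi; rewrite coef_deriv coef0 => /eqP.
by rewrite mulrn_eq0 /= => /eqP.
Qed.

Lemma eqm_cancel n p q q' : p`_0 != 0 -> eqm n (p * q) (p * q') -> eqm n q q'.
Proof.
move=> p0; rewrite /eqm -mulrBr Gauss_dvdpr //.
apply: coprimep_expl; rewrite coprimep_sym coprimepX rootE horner_coef0 //.
Qed.

Lemma eqm_cancelX n k p q : eqm (n + k) ('X^k * p) ('X^k * q) -> eqm n p q.
Proof.
move/eqmP=> H; apply/eqmP=> i Hi; have := H (i + k)%N.
rewrite !coefXnM ltn_add2r (ltnNge _ k) leq_addl /= addnK; exact.
Qed.

End Eqm.

Section Objs.
Variable F : numFieldType.
Implicit Types p q : {poly F}.

Lemma natr_neq0 (k : nat) : (k.+1)%:R != 0 :> F.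
Proof. by rewrite pnatr_eq0. Qed.
Lemma fact_neq0 (k : nat) : (k`!)%:R != 0 :> F.
Proof. by rewrite pnatr_eq0 -lt0n fact_gt0. Qed.

Lemma eqS0 k : (k.+1 == 0%N) = false. Proof. by []. Qed.

Lemma coefXMS p i : ('X * p)`_i.+1 = p`_i.
Proof. by rewrite coefXM. Qed.
Lemma coefXM0 p : ('X * p)`_0 = 0.
Proof. by rewrite coefXM. Qed.

Lemma coef0_comp p q : q`_0 = 0 -> (p \Po q)`_0 = p`_0.
Proof. by move=> q0; rewrite -!horner_coef0 horner_comp (horner_coef0 q) q0. Qed.

Definition Ep n (w : F) : {poly F} := \poly_(i < n) (w ^+ i / (i`!)%:R).

Lemma Ep0 n w : (Ep n.+1 w)`_0 = 1.
Proof. by rewrite coef_poly /= expr0 fact0 divr1. Qed.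

Lemma Ep_deriv n w : eqm n (Ep n.+1 w)^`() (w *: Ep n.+1 w).
Proof.
apply/eqmP=> i Hi; rewrite coef_deriv coefZ !coef_poly ltnS Hi ltnW //.
rewrite factS natrM -mulr_natr exprS.
have := natr_neq0 i; have := fact_neq0 i => H1 H2.
field. by rewrite H1 /= addrC natr1.
Qed.


Lemma coef0M p q : (p * q)`_0 = p`_0 * q`_0.
Proof. by rewrite coefM big_ord1. Qed.

Lemma coef0X p k : (p ^+ k)`_0 = p`_0 ^+ k.
Proof.
elim: k => [|k IH]; first by rewrite !expr0 coefC.
by rewrite !exprS coef0M IH.
Qed.

Lemma EpE_inv n c : eqm n.+1 (Ep n.+1 (- c) * Ep n.+1 c) 1.
Proof.
have -> : (1 : {poly F}) = ((Ep n.+1 (- c) * Ep n.+1 c)`_0)%:P.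
  by rewrite coef0M !Ep0 mulr1.
apply: deriv0_eqm; rewrite derivM.
apply: (@eqm_trans _ _ _ ((-c) *: Ep n.+1 (- c) * Ep n.+1 c +
   Ep n.+1 (- c) * (c *: Ep n.+1 c))).
  by apply: eqmD; apply: eqmM; rewrite ?Ep_deriv ?eqm_refl.
by rewrite -scalerAr -scalerAl scaleNr addNr eqm_refl.
Qed.

Lemma ode_unique n Y c : eqm n Y^`() (c *: Y) -> eqm n.+1 Y (Y`_0 *: Ep n.+1 c).
Proof.
move=> HY.
have HQ : eqm n.+1 (Y * Ep n.+1 (- c)) ((Y`_0)%:P).
  have -> : Y`_0 = (Y * Ep n.+1 (- c))`_0 by rewrite coef0M Ep0 mulr1.
  apply: deriv0_eqm; rewrite derivM.
  apply: (@eqm_trans _ _ _ (c *: Y * Ep n.+1 (- c) + Y * ((- c) *: Ep n.+1 (- c)))).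
    by apply: eqmD; apply: eqmM; rewrite ?Ep_deriv ?eqm_refl.
  by rewrite -scalerAr -scalerAl scaleNr addrN eqm_refl.
apply: (@eqm_trans _ _ _ (Y * (Ep n.+1 (- c) * Ep n.+1 c))).
  by rewrite -{1}(mulr1 Y); apply: eqmM; [exact: eqm_refl | apply: eqm_sym; apply: EpE_inv].
rewrite mulrA -mul_polyC; apply: eqmM => //; exact: eqm_refl.
Qed.

Lemma EpM n a b : eqm n.+1 (Ep n.+1 a * Ep n.+1 b) (Ep n.+1 (a + b)).
Proof.
have -> : Ep n.+1 (a + b) = ((Ep n.+1 a * Ep n.+1 b)`_0) *: Ep n.+1 (a + b).
  by rewrite coef0M !Ep0 mulr1 scale1r.
apply: ode_unique; rewrite derivM.
apply: (@eqm_trans _ _ _ (a *: Ep n.+1 a * Ep n.+1 b + Ep n.+1 a * (b *: Ep n.+1 b))).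
  by apply: eqmD; apply: eqmM; rewrite ?Ep_deriv ?eqm_refl.
by rewrite -scalerAr -scalerAl -scalerDl eqm_refl.
Qed.

Lemma coef_compN p i : (p \Po (- 'X))`_i = (-1) ^+ i * p`_i.
Proof.
elim/poly_ind: p i => [|p c IH] i; first by rewrite comp_poly0 !coef0 mulr0.
rewrite comp_polyD comp_polyM comp_polyX comp_polyC !coefD !coefC coefMX.
rewrite ?mulrN ?coefN mulrC ?mulrN ?coefN coefXM.
case: i => [|i] /=; first by rewrite expr0 mul1r oppr0 !add0r.
by rewrite IH !addr0 exprS mulNr mul1r mulNr.
Qed.


Lemma gbinom0 (v : F) : gbinom v 0 = 1.
Proof. by rewrite /gbinom big_ord0 fact0 divr1. Qed.

Lemma gbinomS (v : F) i : (i.+1)%:R * gbinom v i.+1 = (v - i%:R) * gbinom v i.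
Proof.
rewrite /gbinom big_ord_recr /= factS natrM.
have := natr_neq0 i; have := fact_neq0 i => H1 H2.
field. by rewrite H1 /= addrC natr1.
Qed.

Definition Bp n (v : F) : {poly F} := \poly_(i < n) ((-1) ^+ i * gbinom v i).

Lemma Bp0 n v : (Bp n.+1 v)`_0 = 1.
Proof. by rewrite coef_poly /= expr0 gbinom0 mulr1. Qed.

Lemma Bp_ode n v : eqm n ((1 - 'X) * (Bp n.+1 v)^`()) ((- v) *: Bp n.+1 v).
Proof.
apply/eqmP=> i Hi; rewrite mulrBl mul1r coefB coefXM coefZ !coef_deriv.
case: i Hi => [|k] Hk.
  rewrite eqxx !coef_poly ltnS Hk.
  have := gbinomS v 0; rewrite mul1r subr0 gbinom0 mulr1 => ->.
  by rewrite expr1 expr0 mulr1 subr0 mulr1n mulr1 mulN1r.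
rewrite (_ : (k.+1 == 0%N) = false) // succnK.
rewrite !coef_poly !ltnS Hk (ltnW Hk).
have := gbinomS v k.+1 => H.
move: (gbinom v k.+2) (gbinom v k.+1) H => g2 g1 H.
have E : g2 *+ k.+2 = (v - k.+1%:R) * g1 by rewrite -H mulr_natl.
rewrite -mulrnAr E !exprS.
ring.
Qed.


Definition Tp n : {poly F} := 1 - Ep n (-1).

Lemma Tp0 n : (Tp n.+1)`_0 = 0.
Proof. by rewrite coefB coefC Ep0 subrr. Qed.

Lemma Tp_deriv n : eqm n (Tp n.+1)^`() (1 - Tp n.+1).
Proof.
rewrite /Tp derivB -polyC1 derivC sub0r opprB polyC1 addrC subrK.
rewrite -[X in eqm _ _ X]opprK -(scaleN1r (Ep _ _)) ; apply: eqmN; exact: Ep_deriv.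
Qed.

Lemma compT_deriv n Q :
  eqm n ((Q \Po Tp n.+1)^`()) (((1 - 'X) * Q^`()) \Po Tp n.+1).
Proof.
rewrite deriv_comp rmorphM rmorphB rmorph1 /= comp_polyX mulrC.
apply: eqmM; [exact: Tp_deriv | exact: eqm_refl].
Qed.

Lemma BT n v : eqm n.+1 (Bp n.+1 v \Po Tp n.+1) (Ep n.+1 (- v)).
Proof.
rewrite -[Ep _ _]scale1r -(Bp0 n v) -(coef0_comp _ (Tp0 n)).
apply: ode_unique; apply: eqm_trans (compT_deriv _ _) _.
rewrite -comp_polyZ; apply: eqm_comp; [exact: Tp0 | exact: Bp_ode].
Qed.

Definition Lg n : {poly F} := \poly_(i < n) (if i == 0%N then 0 else (i%:R)^-1).

Lemma Lg_ode n : eqm n ((1 - 'X) * (Lg n.+1)^`()) 1.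
Proof.
have D : forall j, (j < n)%N -> (Lg n.+1)^`()`_j = 1.
  move=> j Hj; rewrite coef_deriv coef_poly ltnS Hj eqS0 -[LHS]mulr_natr mulVf //.
  exact: natr_neq0.
apply/eqmP=> i Hi; rewrite mulrBl mul1r coefB coefXM coefC D //.
case: i Hi => [|k] Hk; first by rewrite eqxx subr0.
by rewrite (_ : (k.+1 == 0%N) = false) // succnK D ?subrr // ltnW.
Qed.

Lemma LT n : eqm n.+1 (Lg n.+1 \Po Tp n.+1) 'X.
Proof.
have H : eqm n.+1 (Lg n.+1 \Po Tp n.+1 - 'X) 0.
  have -> : (0 : {poly F}) = ((Lg n.+1 \Po Tp n.+1 - 'X)`_0)%:P.
    by rewrite coefB coef0_comp ?Tp0 // coefX coef_poly /= subr0.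
  apply: deriv0_eqm; rewrite derivB derivX.
  rewrite -(subrr (1 : {poly F})); apply: eqmB; last exact: eqm_refl.
  apply: eqm_trans (compT_deriv _ _) _.
  rewrite -[X in eqm _ _ X](comp_polyC 1 (Tp n.+1)) polyC1.
  by apply: eqm_comp; [exact: Tp0 | exact: Lg_ode].
by move/eqmP: H => H; apply/eqmP=> i /H; rewrite coefB coef0 => /eqP; rewrite subr_eq0 => /eqP.
Qed.


Definition Pa n (a : nat -> F) : {poly F} := \poly_(i < n) (if i == 0%N then 0 else a i).

Lemma Pa0 n a : (Pa n a)`_0 = 0.
Proof. by rewrite coef_poly; case: n. Qed.

Lemma PA_id n :
  eqm n ('X^2 * (1 + 2%:R *: Pa n seqA)) (2%:R *: (Lg n - 'X)).
Proof.
apply/eqmP=> i Hi; rewrite coefXnM coefZ coefB coefD coefZ coefC coefX !coef_poly Hi.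
case: i Hi => [|[|[|k]]] Hk; rewrite ?eqS0 /=.
- by rewrite subrr mulr0.
- by rewrite invr1 subrr mulr0.
- by rewrite if_same; field.
- have H : (k.+1 < n)%N by lia.
  rewrite (_ : (k.+3 - 2 = k.+1)%N) // H subr0 add0r.
  by rewrite /seqA.
Qed.


Lemma PB_id n :
  eqm n ('X^2 * (1 + 2%:R *: Pa n seqB)) (2%:R *: (Ep n 1 - 1 - 'X)).
Proof.
apply/eqmP=> i Hi; rewrite coefXnM coefZ !coefB coefD coefZ !coefC coefX !coef_poly Hi.
case: i Hi => [|[|[|k]]] Hk; rewrite ?eqS0 /=.
- by rewrite expr0 fact0 divr1 subrr subr0 mulr0.
- by rewrite expr1 (_ : 1`! = 1)%N // divr1 subr0 subrr mulr0.
- by rewrite if_same expr1n (_ : 2`! = 2)%N //; field.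
- have H : (k.+1 < n)%N by lia.
  rewrite (_ : (k.+3 - 2 = k.+1)%N) // H !subr0 add0r expr1n.
  by rewrite /seqB div1r.
Qed.

Lemma dfactm1SS m : dfactm1 m.+2 = (m.+1 * dfactm1 m)%N.
Proof. by case: m => [|m]. Qed.

Definition Dp n e : {poly F} :=
  \poly_(k < n) ((dfactm1 (e.-1 + 2 * k))%:R / ((-1) ^+ k * (k`!)%:R)).

Lemma Dp0 n e : (Dp n.+1 e)`_0 = (dfactm1 e.-1)%:R.
Proof. by rewrite coef_poly /= expr0 fact0 mulr1 divr1 muln0 addn0. Qed.

Lemma sign_neq0 k : (-1) ^+ k != 0 :> F.
Proof. by rewrite signr_eq0. Qed.

Lemma Dp_ode n e : (0 < e)%N ->
  eqm n ((1 + 2%:R *: 'X) * (Dp n.+1 e)^`() + e%:R *: Dp n.+1 e) 0.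
Proof.
move=> He; apply/eqmP=> j Hj.
rewrite coefD mulrDl mul1r coefD -scalerAl !coefZ coef0.
have Hd : forall i, (dfactm1 (e.-1 + 2 * i.+1))%:R =
     (e + 2 * i)%:R * (dfactm1 (e.-1 + 2 * i))%:R :> F.
  move=> i; rewrite (_ : (e.-1 + 2 * i.+1 = (e.-1 + 2 * i).+2)%N); last by lia.
  rewrite dfactm1SS natrM (_ : ((e.-1 + 2 * i).+1 = e + 2 * i)%N) //; lia.
case: j Hj => [|k] Hk.
  rewrite coefXM0 coef_deriv !coef_poly !ltnS Hk /= Hd.
  rewrite muln0 !addn0 expr1 expr0 (_ : 1`! = 1)%N // fact0 mulr1n.
  by field.
rewrite coefXMS !coef_deriv !coef_poly !ltnS Hk (ltnW Hk) Hd.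
move: (dfactm1 _)%:R => x.
rewrite (factS k.+1) natrM.
have := fact_neq0 k.+1; have := natr_neq0 k.+1; have := sign_neq0 k.+1 => H1 H2 H3.
rewrite !exprS; field.
by rewrite H3 sign_neq0 /= -natrD pnatr_eq0.
Qed.

Lemma Dp_derivS n e : (0 < e)%N -> eqm n (Dp n.+1 e)^`() (- Dp n.+1 e.+2).
Proof.
move=> He; apply/eqmP=> j Hj; rewrite coefN coef_deriv !coef_poly !ltnS Hj (ltnW Hj).
rewrite (_ : (e.-1 + 2 * j.+1 = e.+2.-1 + 2 * j)%N); last by lia.
move: (dfactm1 _)%:R => x.
rewrite factS natrM.
have := fact_neq0 j; have := natr_neq0 j; have := sign_neq0 j => H1 H2 H3.
rewrite !exprS; field.
by rewrite H3 H1 /= addrC natr1 H2.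
Qed.

Lemma Dp_mulS n e : (0 < e)%N ->
  eqm n ((1 + 2%:R *: 'X) * Dp n e.+2) (e%:R *: Dp n e).
Proof.
move=> He; apply/eqmP=> j Hj.
rewrite mulrDl mul1r coefD -scalerAl !coefZ.
have Hd : forall i, (dfactm1 (e.+2.-1 + 2 * i))%:R =
     (e + 2 * i)%:R * (dfactm1 (e.-1 + 2 * i))%:R :> F.
  move=> i; rewrite (_ : (e.+2.-1 + 2 * i = (e.-1 + 2 * i).+2)%N); last by lia.
  rewrite dfactm1SS natrM (_ : ((e.-1 + 2 * i).+1 = e + 2 * i)%N) //; lia.
case: j Hj => [|k] Hk.
  rewrite coefXM0 !coef_poly Hk Hd muln0 !addn0 expr0 fact0 mulr0 addr0.
  by field.
rewrite coefXMS !coef_poly Hk (ltnW Hk) !Hd.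
rewrite (_ : (e.-1 + 2 * k.+1 = (e.-1 + 2 * k).+2)%N); last by lia.
rewrite dfactm1SS natrM (_ : ((e.-1 + 2 * k).+1 = e + 2 * k)%N); last by lia.
move: (dfactm1 _)%:R => x.
rewrite factS natrM !natrD !natrM.
have := fact_neq0 k; have := natr_neq0 k; have := sign_neq0 k => H1 H2 H3.
rewrite !exprS; field.
by rewrite H3 H1 /= addrC natr1 H2.
Qed.

Lemma Good_y n e : (0 < e)%N ->
  eqm n.+1 ((Dp n.+1 e) ^+ 2 * (1 + 2%:R *: 'X) ^+ e) (((dfactm1 e.-1)%:R ^+ 2)%:P).
Proof.
move=> He.
have -> : (dfactm1 e.-1)%:R ^+ 2 = ((Dp n.+1 e) ^+ 2 * (1 + 2%:R *: 'X) ^+ e)`_0.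
  rewrite coef0M !coef0X Dp0 coefD coefZ coefC coefX /= mulr0 addr0 expr1n mulr1.
  done.
apply: deriv0_eqm.
set D := Dp n.+1 e; set G := (1 + 2%:R *: 'X : {poly F}).
have HG : G ^+ e = G * G ^+ e.-1 by rewrite -exprS prednK.
have -> : (D ^+ 2 * G ^+ e)^`() = (2%:R *: (D * G ^+ e.-1)) * (G * D^`() + e%:R *: D).
  rewrite derivM !deriv_exp /= {2}/G derivD derivC add0r derivZ derivX.
  rewrite HG expr1 -!scalerAl -!mul_polyC.
  move: (G ^+ e.-1) => Ge.
  rewrite !polyC_natr; ring.
rewrite -[X in eqm _ _ X](mulr0 (2%:R *: (D * G ^+ e.-1))).
apply: eqmM; first exact: eqm_refl.
exact: Dp_ode.
Qed.

End Objs.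

Section Cov.
Variable F : numFieldType.
Implicit Types p q : {poly F}.

Lemma X_dvd p : p`_0 = 0 -> 'X %| p.
Proof. by move=> p0; rewrite -(subr0 'X) -polyC0 dvdp_XsubCl rootE horner_coef0 p0. Qed.

Lemma exists_inv n p : p`_0 != 0 -> {q | eqm n (p * q) 1}.
Proof.
move=> p0; set c := p`_0; set r := 1 - c^-1 *: p.
have r0 : r`_0 = 0 by rewrite coefB coefC coefZ mulVf // subrr.
exists (c^-1 *: \sum_(k < n) r ^+ k).
have -> : p * (c^-1 *: \sum_(k < n) r ^+ k) = 1 - r ^+ n.
  rewrite -[1 - r ^+ n]opprB subrX1 -mulNr opprB.
  by rewrite /r opprB addrCA subrr addr0 -scalerAr -scalerAl.
rewrite /eqm addrAC subrr add0r dvdpNr; apply: dvdp_exp2r; exact: X_dvd.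
Qed.

Lemma mulrnI (x y : F) k : x *+ k.+1 = y *+ k.+1 -> x = y.
Proof.
move/eqP; rewrite -subr_eq0 -mulrnBl mulrn_eq0 /= subr_eq0 => /eqP //.
Qed.

Lemma key m (T phi psi : {poly F}) i N : T = phi * 'X -> eqm m.+1 (phi * psi) 1 -> (N < m)%N ->
  (T ^+ i * T^`() * psi ^+ N.+1)`_N = (i == N)%:R.
Proof.
move=> ET Hinv HN.
have E1 : T ^+ i * T^`() * psi ^+ N.+1 = 'X^i * (phi ^+ i * T^`() * psi ^+ N.+1).
  by rewrite {1}ET exprMn; ring.
rewrite E1 coefXnM.
case: ltnP => [Hlt | Hle].
  rewrite (_ : (i == N) = false) //; apply/negbTE; by rewrite neq_ltn Hlt orbT.
have HN' : N = (i + (N - i))%N by rewrite subnKC.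
move: (N - i)%N HN' => j HN'.
have Td : T^`() = phi^`() * 'X + phi by rewrite ET derivM derivX mulr1.
have EQ : eqm m.+1 (phi ^+ i * T^`() * psi ^+ N.+1)
                   (psi ^+ j + 'X * (phi^`() * psi ^+ j.+1)).
  have -> : phi ^+ i * T^`() * psi ^+ N.+1 =
     (phi * psi) ^+ i * ((phi * psi) * psi ^+ j + 'X * (phi^`() * psi ^+ j.+1)).
    rewrite Td HN' exprS exprD exprMn exprS; ring.
  apply: eqm_trans.
    apply: eqmM; first by apply: eqmX; exact: Hinv.
    apply: eqmD; last exact: eqm_refl.
    apply: eqmM; [exact: Hinv | exact: eqm_refl].
  rewrite expr1n !mul1r; exact: eqm_refl.
have Hj : (j < m.+1)%N by lia.
rewrite (eqm_coef EQ Hj).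
case: j HN' EQ Hj => [|k] HN' EQ Hj.
  by rewrite HN' addn0 eqxx coefD coefC coefXM0 addr0.
rewrite (_ : (i == N) = false); last by apply/negbTE; rewrite HN'; lia.
rewrite coefD coefXMS.
have Hm : eqm m.+1 (phi * psi) 1 := Hinv.
have Hinv' : eqm m (phi * psi) 1 by apply: eqm_le Hinv.
have Hd0 : eqm m (phi^`() * psi + phi * psi^`()) 0.
  rewrite -derivM -(derivC (1 : F)) polyC1; exact: eqm_deriv.
have Hd : eqm m psi^`() (- (phi^`() * psi ^+ 2)).
  apply: (@eqm_trans _ _ _ ((phi * psi) * psi^`())).
    rewrite -{1}(mul1r psi^`()); apply: eqmM; [exact: eqm_sym | exact: eqm_refl].
  have -> : phi * psi * psi^`() = psi * (phi^`() * psi + phi * psi^`()) - phi^`() * psi ^+ 2.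
    ring.
  rewrite -[X in eqm _ _ X]add0r; apply: eqmB; last exact: eqm_refl.
  rewrite -(mulr0 psi); apply: eqmM; [exact: eqm_refl | exact: Hd0].
have H2 : eqm m (psi ^+ k.+1)^`() (- (phi^`() * psi ^+ k.+2) *+ k.+1).
  rewrite deriv_exp /=.
  apply: (@eqm_trans _ _ _ (- (phi^`() * psi ^+ 2) * psi ^+ k *+ k.+1)).
    by apply: eqm_sym; apply/eqmP=> l Hl; rewrite !coefMn (eqm_coef (eqmM (eqm_sym Hd) (eqm_refl _ (psi ^+ k))) Hl).
  have -> : - (phi^`() * psi ^+ 2) * psi ^+ k *+ k.+1 = - (phi^`() * psi ^+ k.+2) *+ k.+1.
    by rewrite !exprS expr0; ring.
  exact: eqm_refl.
have Hk : (k < m)%N by lia.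
have := eqm_coef H2 Hk; rewrite coef_deriv coefMn coefN => /mulrnI ->.
by rewrite addNr.
Qed.

Lemma cov m (T phi psi G : {poly F}) N : T = phi * 'X -> eqm m.+1 (phi * psi) 1 ->
  (N < m)%N -> G`_N = ((G \Po T) * T^`() * psi ^+ N.+1)`_N.
Proof.
move=> ET Hinv HN.
rewrite comp_polyE !mulr_suml coef_sum.
under eq_bigr => i _ do rewrite -!scalerAl coefZ (@key m T phi psi i N ET Hinv HN).
case: (ltnP N (size G)) => HS.
  rewrite (bigD1 (Ordinal HS)) //= eqxx mulr1 big1 ?addr0 // => i /eqP Hi.
  rewrite (_ : (i == N :> nat) = false) ?mulr0 //; apply/negbTE; apply/eqP => E.
  by apply: Hi; apply: val_inj.
rewrite nth_default // big1 // => i _.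
rewrite (_ : (i == N :> nat) = false) ?mulr0 //; apply/negbTE.
by rewrite neq_ltn (leq_trans (ltn_ord i) HS).
Qed.

End Cov.

Section Stage1.
Variable F : numFieldType.
Implicit Types p q : {poly F}.

Definition Cp n e (a : nat -> F) : {poly F} := Dp F n e \Po Pa n a.

Lemma Good_C n e a : (0 < e)%N ->
  eqm n.+1 ((Cp n.+1 e a) ^+ 2 * (1 + 2%:R *: Pa n.+1 a) ^+ e)
           (((dfactm1 e.-1)%:R ^+ 2)%:P).
Proof.
move=> He; have := eqm_comp (Pa0 n.+1 a) (Good_y F n He).
by rewrite rmorphM !rmorphXn rmorphD rmorph1 /= comp_polyZ comp_polyX comp_polyC.
Qed.

Lemma Cp0 n e a : (Cp n.+1 e a)`_0 = (dfactm1 e.-1)%:R.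
Proof. by rewrite coef0_comp ?Pa0 // Dp0. Qed.

Lemma Ep_compN n (w : F) : Ep n w \Po (- 'X) = Ep n (- w).
Proof.
apply/polyP=> i; rewrite coef_compN !coef_poly.
by case: (i < n)%N; rewrite ?mulr0 // (exprNn w) mulrA.
Qed.

Lemma compXn q k : 'X^k \Po q = q ^+ k.
Proof. by rewrite rmorphXn /= comp_polyX. Qed.

Lemma mX0 : (- 'X : {poly F})`_0 = 0.
Proof. by rewrite coefN coefX oppr0. Qed.

Lemma oneT n : 1 - Tp F n = Ep n (-1).
Proof. by rewrite /Tp opprB addrC subrK. Qed.

Lemma PA_T n : eqm n.+1 (Tp F n.+1 ^+ 2 * ((1 + 2%:R *: Pa n.+1 seqA) \Po Tp F n.+1))
                        ('X^2 * ((1 + 2%:R *: Pa n.+1 seqB) \Po (- 'X))).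
Proof.
apply: (@eqm_trans _ _ _ (2%:R *: ('X - Tp F n.+1))).
  have -> : Tp F n.+1 ^+ 2 * ((1 + 2%:R *: Pa n.+1 seqA) \Po Tp F n.+1) =
            ('X^2 * (1 + 2%:R *: Pa n.+1 seqA)) \Po Tp F n.+1.
    by rewrite comp_polyM compXn.
  apply: eqm_trans; first by apply: eqm_comp; [exact: Tp0 | exact: PA_id].
  rewrite comp_polyZ rmorphB /= comp_polyX; apply: eqmZ; apply: eqmB; last exact: eqm_refl.
  exact: LT.
have -> : ('X^2 * ((1 + 2%:R *: Pa n.+1 seqB) \Po (- 'X)) : {poly F}) =
          ('X^2 * (1 + 2%:R *: Pa n.+1 seqB)) \Po (- 'X).
  by rewrite comp_polyM compXn sqrrN.
apply: eqm_sym; apply: eqm_trans; first by apply: eqm_comp; [exact: mX0 | exact: PB_id].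
rewrite comp_polyZ !rmorphB /= rmorph1 comp_polyX Ep_compN -oneT.
have -> : 1 - Tp F n.+1 - 1 - - 'X = 'X - Tp F n.+1 by ring.
exact: eqm_refl.
Qed.

Lemma dfactm1_neq0 k : (dfactm1 k)%:R != 0 :> F.
Proof.
rewrite pnatr_eq0 -lt0n.
have H : forall m, (0 < dfact m)%N /\ (0 < dfact m.+1)%N.
  elim=> [|m [H1 H2]]; first by [].
  by split => //; rewrite /= muln_gt0 H1.
by case: k => [|k] //=; case: (H k).
Qed.

Lemma stage1 n e (v : F) : (0 < e)%N -> (3 * e < n)%N ->
  ((Cp n.+1 e seqA) * Bp n.+1 v)`_(e.-1) =
  (-1) ^+ (e.-1) * ((Cp n.+1 e seqB) * Ep n.+1 (v + 1))`_(e.-1).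
Proof.
move=> He Hn.
have eN : e.-1.+1 = e by rewrite prednK.
set T := Tp F n.+1.
set phi := drop_poly 1 T.
have ET : T = phi * 'X.
  rewrite -{1}(poly_take_drop 1 T) (_ : take_poly 1 T = 0) ?add0r ?expr1 //.
  apply/polyP => i; rewrite coef_take_poly coef0; case: i => [|i] //=.
  exact: Tp0.
have phi0 : phi`_0 = 1.
  rewrite coef_drop_poly add0n /T /Tp coefB coefC coef_poly /=.
  rewrite expr1 (_ : 1`! = 1)%N // divr1 (_ : (1 < n.+1)%N = true) ?sub0r ?opprK //; lia.
have phi0' : phi`_0 != 0 by rewrite phi0 oner_neq0.
have [psi Hinv] := exists_inv n.+1 phi0'.
have psi0 : psi`_0 = 1.
  by have := eqm_coef Hinv (ltn0Sn n); rewrite coef0M phi0 mul1r coefC.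
have HN : (e.-1 < n)%N by lia.
rewrite (cov _ ET Hinv HN) comp_polyM eN.
set c := (dfactm1 e.-1)%:R : F.
set CA := Cp n.+1 e seqA; set CB := Cp n.+1 e seqB.
set Z := (CA \Po T) * psi ^+ e.
set Zt := CB \Po (- 'X).
set W := (1 + 2%:R *: Pa n.+1 seqB) \Po (- 'X) : {poly F}.
set K := (n.+1 - 2 * e)%N.
have HKn : (K + 2 * e = n.+1)%N by rewrite /K subnK //; lia.
have HZ : eqm K Z Zt.
  have F1 : eqm n.+1 ((CA \Po T) ^+ 2 * ((1 + 2%:R *: Pa n.+1 seqA) \Po T) ^+ e) (c ^+ 2)%:P.
    have := eqm_comp (Tp0 F n) (Good_C n seqA He).
    by rewrite comp_polyM !rmorphXn /= comp_polyC.
  have F3 : eqm n.+1 (T * psi) 'X.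
    rewrite ET -mulrA mulrC -mulrA -[X in eqm _ _ X]mulr1.
    by apply: eqmM; [exact: eqm_refl | rewrite mulrC].
  have F4 : eqm n.+1 (Zt ^+ 2 * W ^+ e) (c ^+ 2)%:P.
    have := eqm_comp mX0 (Good_C n seqB He).
    by rewrite comp_polyM !rmorphXn /= comp_polyC.
  have M : eqm n.+1 ('X^(2 * e)%N * (Z ^+ 2 * W ^+ e)) ('X^(2 * e)%N * (Zt ^+ 2 * W ^+ e)).
    apply: (@eqm_trans _ _ _ ((c ^+ 2)%:P * 'X^(2 * e)%N)); last first.
      rewrite mulrC; apply: eqmM; [exact: eqm_refl | exact: eqm_sym].
    have -> : 'X^(2 * e)%N * (Z ^+ 2 * W ^+ e) =
              (CA \Po T) ^+ 2 * (psi ^+ 2 * ('X^2 * W)) ^+ e.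
      rewrite /Z mul2n -addnn exprD !expr2 !exprMn; ring.
    apply: (@eqm_trans _ _ _ ((CA \Po T) ^+ 2 * (psi ^+ 2 * (T ^+ 2 *
                   ((1 + 2%:R *: Pa n.+1 seqA) \Po T))) ^+ e)).
      apply: eqmM; first exact: eqm_refl.
      apply: eqmX; apply: eqmM; first exact: eqm_refl.
      apply: eqm_sym; exact: PA_T.
    have -> : (CA \Po T) ^+ 2 * (psi ^+ 2 * (T ^+ 2 * ((1 + 2%:R *: Pa n.+1 seqA) \Po T))) ^+ e
       = ((CA \Po T) ^+ 2 * ((1 + 2%:R *: Pa n.+1 seqA) \Po T) ^+ e) * ((T * psi) ^+ 2) ^+ e.
      by rewrite !exprMn; ring.
    rewrite exprM; apply: eqmM; first exact: F1.
    by apply: eqmX; apply: eqmX.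
  have M2 : eqm K (Z ^+ 2 * W ^+ e) (Zt ^+ 2 * W ^+ e).
    by apply: (@eqm_cancelX _ _ (2 * e)); rewrite HKn.
  have W0 : (W ^+ e)`_0 != 0.
    by rewrite coef0X coef0_comp ?mX0 // coefD coefZ Pa0 coefC mulr0 addr0 expr1n oner_neq0.
  have M3 : eqm K (Z ^+ 2) (Zt ^+ 2).
    by apply: (eqm_cancel W0); rewrite ![W ^+ e * _]mulrC.
  have Z0 : Z`_0 = c by rewrite coef0M coef0X psi0 expr1n mulr1 coef0_comp ?Tp0 // Cp0.
  have Zt0 : Zt`_0 = c by rewrite coef0_comp ?mX0 // Cp0.
  have S0 : (Z + Zt)`_0 != 0.
    by rewrite coefD Z0 Zt0 -mulr2n mulrn_eq0 /= dfactm1_neq0.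
  have M4 : eqm K ((Z + Zt) * (Z - Zt)) ((Z + Zt) * 0).
    rewrite mulr0 (_ : (Z + Zt) * (Z - Zt) = Z ^+ 2 - Zt ^+ 2); last by ring.
    by rewrite -(subrr (Zt ^+ 2)); apply: eqmB; [exact: M3 | exact: eqm_refl].
  have := eqm_cancel S0 M4; rewrite /eqm subr0 => H; exact: H.
have Hprod : eqm K ((CA \Po T) * (Bp n.+1 v \Po T) * T^`() * psi ^+ e)
                   (Zt * Ep n.+1 (- (v + 1))).
  have -> : (CA \Po T) * (Bp n.+1 v \Po T) * T^`() * psi ^+ e =
            Z * ((Bp n.+1 v \Po T) * T^`()) by rewrite /Z; ring.
  apply: eqmM; first exact: HZ.
  apply: (@eqm_le _ K n); first by rewrite /K; lia.
  apply: eqm_trans; first by apply: eqmM; [exact: (eqm_le (leqnSn n) (BT n v)) | exact: Tp_deriv].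
  rewrite oneT opprD; exact: (eqm_le (leqnSn n) (EpM n (- v) (-1))).
have HK : (e.-1 < K)%N by rewrite /K; lia.
rewrite (eqm_coef Hprod HK) -Ep_compN /Zt -comp_polyM coef_compN.
done.
Qed.

End Stage1.

Section Stage2.
Variable F : numFieldType.
Implicit Types p q : {poly F}.

Definition Phi n e (w : F) := ((Cp n.+1 e seqB) * Ep n.+1 w)`_(e.-1).

Lemma eqm_eq n p q : p = q -> eqm n p q.
Proof. by move->; exact: eqm_refl. Qed.

Lemma deriv1 : (1 : {poly F})^`() = 0.
Proof. by rewrite -polyC1 derivC. Qed.

Lemma stage2 m e (v : F) : (0 < e)%N -> (e + 5 < m)%N ->
  Phi m.+1 e.+2 (v + 1) = Phi m.+1 e.+2 v + v * Phi m.+1 e v.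
Proof.
move=> He Hm; rewrite /Phi.
set P := Pa m.+2 (seqB (F:=F)).
set g := 1 + 2%:R *: P.
set Ce := Cp m.+2 e seqB; set Ce2 := Cp m.+2 e.+2 seqB.
set E := Ep m.+2.
set H := Ce * E v.
have two0 : (2%:R : F) != 0 by exact: (natr_neq0 F 1).
have PB : eqm m.+2 ('X^2 * g) (2%:R *: (E 1 - 1 - 'X)) := PB_id F m.+2.
have gC : eqm m.+2 (g * Ce2) (e%:R *: Ce).
  have := eqm_comp (Pa0 m.+2 seqB) (Dp_mulS F m.+2 He).
  by rewrite comp_polyM comp_polyZ rmorphD rmorph1 /= comp_polyZ comp_polyX.
have E1 : eqm m.+2 (E 1) (1 + 'X + 2%:R^-1 *: ('X^2 * g)).
  have -> : E 1 = 1 + 'X + 2%:R^-1 *: (2%:R *: (E 1 - 1 - 'X)).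
    by rewrite scalerA mulVf // scale1r; ring.
  apply: eqmD; first exact: eqm_refl.
  by apply: eqmZ; apply: eqm_sym.
have Q1 : eqm m.+2 (Ce2 * E (v + 1))
   (Ce2 * E v + 'X * (Ce2 * E v) + (2%:R^-1 * e%:R) *: ('X^2 * H)).
  apply: (@eqm_trans _ _ _ (Ce2 * (E v * (1 + 'X + 2%:R^-1 *: ('X^2 * g))))).
    apply: eqmM; first exact: eqm_refl.
    apply: eqm_trans; first exact: (eqm_sym (EpM m.+1 v 1)).
    apply: eqmM; [exact: eqm_refl | exact: E1].
  apply: (@eqm_trans _ _ _ (Ce2 * E v + 'X * (Ce2 * E v) +
                            2%:R^-1 *: ('X^2 * (g * Ce2) * E v))).
    rewrite -!mul_polyC; apply: eqm_eq; ring.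
  apply: eqmD; first exact: eqm_refl.
  rewrite /H -scalerA; apply: eqmZ.
  rewrite -!mul_polyC.
  have -> : (e%:R)%:P * ('X^2 * (Ce * E v)) = 'X^2 * ((e%:R)%:P * Ce) * E v by ring.
  apply: eqmM; [apply: eqmM; [exact: eqm_refl | rewrite mul_polyC; exact: gC] | exact: eqm_refl].
have CeD : eqm m.+1 Ce^`() (- (Ce2 * P^`())).
  rewrite /Ce /Cp deriv_comp -mulNr; apply: eqmM; last exact: eqm_refl.
  have := eqm_comp (Pa0 m.+2 seqB) (Dp_derivS F m.+1 He).
  by rewrite rmorphN.
have XP : eqm m ('X * P^`()) (1 + 2%:R^-1 *: ('X * g) - g).
  have D1 := eqm_deriv PB.
  rewrite derivM derivXn expr1 derivZ !derivB deriv1 derivX subr0 in D1.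
  have D2 : eqm m.+1 ('X *+ 2 * g + 'X^2 * g^`()) (2%:R *: 'X + 'X^2 * g).
    apply: eqm_trans; first exact: D1.
    apply: (@eqm_trans _ _ _ (2%:R *: (E 1 - 1))).
      apply: eqmZ; apply: eqmB; last exact: eqm_refl.
      by rewrite -[X in eqm _ _ X]scale1r; exact: Ep_deriv.
    apply: (@eqm_le _ _ m.+2) => //.
    have -> : 2%:R *: (E 1 - 1) = 2%:R *: (E 1 - 1 - 'X) + 2%:R *: 'X.
      by rewrite -scalerDr subrK.
    rewrite addrC; apply: eqmD; first exact: eqm_refl.
    exact: eqm_sym.
  have D3 : eqm m ('X * g^`() + 2%:R *: g) (2%:R%:P + 'X * g).
    apply: (@eqm_cancelX _ _ 1); rewrite addn1.
    apply: (@eqm_trans _ _ _ ('X *+ 2 * g + 'X^2 * g^`())).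
      by apply: eqm_eq; rewrite -!mul_polyC polyC_natr; ring.
    apply: eqm_trans; first exact: D2.
    by apply: eqm_eq; rewrite -!mul_polyC polyC_natr; ring.
  have gd : g^`() = 2%:R *: P^`() by rewrite /g derivD deriv1 add0r derivZ.
  rewrite gd in D3.
  have -> : 'X * P^`() = 2%:R^-1 *: ('X * (2%:R *: P^`()) + 2%:R *: g) - g.
    by rewrite scalerDr !scalerA mulVf // !scale1r -scalerAr scalerA mulVf // scale1r addrK.
  have -> : 1 + 2%:R^-1 *: ('X * g) - g = 2%:R^-1 *: (2%:R%:P + 'X * g) - g.
    by rewrite scalerDr (_ : 2%:R^-1 *: (2%:R)%:P = 1) // -mul_polyC -polyCM mulVf // polyC1.
  apply: eqmB; last exact: eqm_refl.
  by apply: eqmZ.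
have Q2 : eqm m ('X * H^`())
   (- (Ce2 * E v) - (2%:R^-1 * e%:R) *: ('X * H) + e%:R *: H + v *: ('X * H)).
  rewrite /H derivM.
  apply: (@eqm_trans _ _ _ ('X * (- (Ce2 * P^`()) * E v + Ce * (v *: E v)))).
    apply: (@eqm_le _ _ m.+1) => //.
    apply: eqmM; first exact: eqm_refl.
    apply: eqmD; apply: eqmM; rewrite ?CeD ?eqm_refl //; exact: Ep_deriv.
  apply: (@eqm_trans _ _ _ (- (Ce2 * E v) * (1 + 2%:R^-1 *: ('X * g) - g) + v *: ('X * (Ce * E v)))).
    apply: (@eqm_trans _ _ _ (- (Ce2 * E v) * ('X * P^`()) + v *: ('X * (Ce * E v)))).
      by apply: eqm_eq; rewrite -!mul_polyC; ring.
    apply: eqmD; last exact: eqm_refl.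
    apply: eqmM; [exact: eqm_refl | exact: XP].
  apply: (@eqm_trans _ _ _ (- (Ce2 * E v) - 2%:R^-1 *: ('X * (g * Ce2) * E v) +
                            (g * Ce2) * E v + v *: ('X * (Ce * E v)))).
    by apply: eqm_eq; rewrite -!mul_polyC; ring.
  apply: (@eqm_le _ _ m.+2); first by lia.
  apply: eqmD; last exact: eqm_refl.
  apply: eqmD.
    apply: eqmB; first exact: eqm_refl.
    rewrite -scalerA; apply: eqmZ.
    rewrite -!mul_polyC.
    have -> : (e%:R)%:P * ('X * (Ce * E v)) = 'X * ((e%:R)%:P * Ce) * E v by ring.
    apply: eqmM; [apply: eqmM; [exact: eqm_refl | rewrite mul_polyC; exact: gC] | exact: eqm_refl].
  rewrite scalerAl; apply: eqmM; [exact: gC | exact: eqm_refl].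
have e0 : (e == 0%N) = false by rewrite eqn0Ngt He.
have l1 : (e.+1 < m.+2)%N by lia.
have l2 : (e < m)%N by lia.
have C1 := eqm_coef Q1 l1.
have C2 := eqm_coef Q2 l2.
rewrite !coefD !coefZ coefXM coefXnM /= in C1.
rewrite (_ : (e.+1 < 2)%N = false) in C1; last by lia.
rewrite coefXM e0 coef_deriv (prednK He) !coefD !coefN !coefZ !coefXM e0 in C2.
rewrite (_ : (e.+1 - 2 = e.-1)%N) in C1; last by lia.
rewrite /= C1.
move: C2; move: (Ce2 * E v)`_e (Ce2 * E v)`_e.+1 H`_e.-1 H`_e => a b h k C2.
have : a + 2%:R^-1 * e%:R * h = v * h.
  apply: (@addrI _ (k *+ e - a - 2%:R^-1 * e%:R * h)).
  rewrite {1}C2; ring.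
move=> <-; ring.
Qed.

End Stage2.

Section Link.
Variable F : numFieldType.
Implicit Types p q : {poly F}.

Definition innerE e (a : nat -> F) m : F :=
  \sum_(k < m.+1) (dfactm1 (e.-1 + 2 * k))%:R / ((-1) ^+ k * (k`!)%:R) * deMoivre a m k.

Lemma coef_Cp n e a m : (m < n)%N -> (Cp n e a)`_m = innerE e a m.
Proof.
move=> Hm.
rewrite /Cp /Dp poly_def raddf_sum coef_sum /=.
under eq_bigr => i _ do rewrite comp_polyZ compXn coefZ.
rewrite /innerE (big_ord_widen n (fun k => (dfactm1 (e.-1 + 2 * k))%:R /
   ((-1) ^+ k * (k`!)%:R) * deMoivre a m k) Hm) [RHS]big_mkcond /=.
apply: eq_bigr => k _.
case: ifP => Hk.
  congr (_ * _); rewrite /deMoivre.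
  apply: eqm_coef (leqnn _); apply: eqmX.
  apply/eqmP => i Hi; rewrite /Pa !coef_poly Hi.
  by rewrite (leq_trans Hi Hm).
have : 'X %| Pa n a by apply: X_dvd; exact: Pa0.
case/dvdpP => P1 ->; rewrite exprMn coefMXn.
by rewrite (_ : (m < k)%N) ?mulr0 //; rewrite ltnNge -ltnS Hk.
Qed.

Lemma sign_sq k : (-1) ^+ k * (-1) ^+ k = 1 :> F.
Proof. by rewrite -expr2 -exprM mulnC exprM sqrrN !expr1n. Qed.

Lemma linkA n N (v : F) : (3 * N.+1 < n)%N ->
  \sum_(m < N.+1) (-1) ^+ m * gbinom v (N - m) * innerE N.+1 seqA m = Phi n N.+1 (v + 1).
Proof.
move=> Hn.
have S := stage1 v (ltn0Sn N) Hn; rewrite /= in S.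
have E : ((Cp n.+1 N.+1 seqB) * Ep n.+1 (v+1))`_N = (-1)^+N * ((Cp n.+1 N.+1 seqA) * Bp n.+1 v)`_N by rewrite S mulrA sign_sq mul1r.
rewrite /Phi /= E coefM mulr_sumr.
apply: eq_bigr => [[m Hm]] _ /=.
rewrite coef_Cp; last by lia.
rewrite /Bp coef_poly (_ : (N - m < n.+1)%N); last by lia.
rewrite (_ : (-1) ^+ N = (-1) ^+ m * (-1) ^+ (N - m) :> F); last by rewrite -exprD subnKC //; lia.

move: ((-1) ^+ (N - m)) (sign_sq (N - m)) => s ss.
rewrite -[LHS]mulr1 -ss; ring.
Qed.

Lemma linkB n N (v : F) : (N < n)%N ->
  \sum_(m < N.+1) v ^+ (N - m) / ((N - m)`!)%:R * innerE N.+1 seqB m = Phi n N.+1 v.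
Proof.
move=> Hn; rewrite /Phi /= coefM.
apply: eq_bigr => [[m Hm]] _ /=.
rewrite coef_Cp; last by lia.
rewrite /Ep coef_poly (_ : (N - m < n.+1)%N); last by lia.
by rewrite mulrC.
Qed.

End Link.

Section Fin.
Variable F : numFieldType.

Lemma innerRho_E (a : nat -> F) r m : innerRho a r m = innerE (2 * r + 1).+1 a m.
Proof.
apply: eq_bigr => k _.
by rewrite (_ : ((2 * r + 1).+1.-1 + 2 * k = (2 * r + 2 * k).+1)%N) //; lia.
Qed.

Lemma innerGamma_E (a : nat -> F) r m : innerGamma a r m = innerE (2 * r).+1 a m.
Proof. by []. Qed.

Lemma rho_Phi n r (v : F) : (3 * (2 * r + 1).+1 < n)%N ->
  rho r v = (if r == 0%N then 1 else 0) - Phi n (2 * r + 1).+1 (v + 1).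
Proof.
move=> Hn; rewrite /rho; congr (_ - _).
under eq_bigr do rewrite innerRho_E.
exact: linkA.
Qed.

Lemma rhot_Phi n r (v : F) : (2 * r + 1 < n)%N ->
  rhot r v = - Phi n (2 * r + 1).+1 v.
Proof.
move=> Hn; rewrite /rhot; congr (- _).
under eq_bigr do rewrite innerRho_E.
exact: linkB.
Qed.

Lemma gamma_Phi n r (v : F) : (3 * (2 * r).+1 < n)%N ->
  gamma r v = Phi n (2 * r).+1 (v + 1).
Proof. by move=> Hn; rewrite /gamma; exact: linkA. Qed.

Lemma gammat_Phi n r (v : F) : (2 * r < n)%N ->
  gammat r v = Phi n (2 * r).+1 v.
Proof. by move=> Hn; rewrite /gammat; exact: linkB. Qed.

Lemma Phi2 n (w : F) : (0 < n)%N -> Phi n 2 w = w + (Cp n.+1 2 seqB)`_1.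
Proof.
move=> Hn.
rewrite /Phi /= coefM !big_ord_recl big_ord0 addr0 /=.
rewrite Cp0 /Ep !coef_poly /= (_ : bump 0 0 = 1)%N // subn0 subnn.
rewrite (_ : (1 < n.+1)%N = true) // expr0 fact0 divr1 expr1.
by rewrite mul1r; field.
Qed.

Lemma Phi1 n (w : F) : Phi n 1 w = 1.
Proof. by rewrite /Phi /= coef0M Cp0 Ep0 mulr1. Qed.

End Fin.

Unset Implicit Arguments.

Theorem proposition6p3 (R : realType) (v : R[i]) :
  rho 0 v = rhot 0 v /\ gamma 0 v = gammat 0 v /\
  (forall r : nat, (1 <= r)%N ->
     rho r v = rhot r v + v * rhot r.-1 v /\
     gamma r v = gammat r v + v * gammat r.-1 v).
Proof.
split.
  rewrite (@rho_Phi _ 20) // (@rhot_Phi _ 20) //= !Phi2 //.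
  by move: (Cp _ _ _)`_1 => c; ring.
split.
  by rewrite (@gamma_Phi _ 20) // (@gammat_Phi _ 20) // !Phi1.
case=> [|r] // _.
set m := (8 * r + 30)%N.
have e1 : ((2 * r.+1 + 1).+1 = ((2 * r + 1).+1).+2)%N by lia.
have e2 : ((2 * r.+1).+1 = ((2 * r).+1).+2)%N by lia.
split.
  rewrite (@rho_Phi _ m.+1); last by rewrite /m; lia.
  rewrite (@rhot_Phi _ m.+1); last by rewrite /m; lia.
  rewrite /= (@rhot_Phi _ m.+1); last by rewrite /m; lia.
  rewrite e1 stage2 //; last by rewrite /m; lia.
  ring.
rewrite (@gamma_Phi _ m.+1); last by rewrite /m; lia.
rewrite (@gammat_Phi _ m.+1); last by rewrite /m; lia.
rewrite /= (@gammat_Phi _ m.+1); last by rewrite /m; lia.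
rewrite e2 stage2 //; rewrite /m; lia.
Qed.
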